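(* Let $E$ be a real Banach space, $K\subset E$ nonempty closed convex, $Y$ a real Banach space containing a closed, convex, pointed cone $C$ with nonempty interior, $f:E\times E\to Y$, $T:K\to\mathcal P(K)$, and $g\in\mathcal F$ satisfying H1–H4, with B1–B4 holding. If Algorithm SEML stops at the $k$-th iteration (i.e. $z^k=v^k$), then $x^k$ is a solution of the vector quasi-equilibrium problem, i.e. $x^k\in T(x^k)$ and $f(x^k,y)\notin-\mathrm{int}(C)$ for all $y\in T(x^k)$.
   Context: $C^+=\{z\in Y^*:\langle y,z\rangle\ge0\ \forall y\in C\}$; $y\preceq y'$ iff $y'-y\in C$; $C$-convex: $G(tx+(1-t)y)\preceq tG(x)+(1-t)G(y)$. $\mathcal F$: functions $g:E\to\mathbb R$ strictly convex, lower semicontinuous, Gâteaux differentiable with derivative $g'$. $D_g(x,y)=g(x)-g(y)-\langle x-y,g'(y)\rangle$; $v_g(x,t)=\inf\{D_g(y,x):\|y-x\|=t\}$. H1: level sets of $D_g(x,\cdot)$ bounded; H2: $\inf_{x\in A}v_g(x,t)>0$ for $t>0$, bounded $A$; H3: $g'$ uniformly continuous on bounded sets; H4: $\lim_{\|x\|\to\infty}(g(x)-\rho\|x-z\|)=\infty$ for all $z$, $\rho>0$. $\Pi^g_D(x)$: unique minimizer of $D_g(\cdot,x)$ over nonempty closed convex $D$. B1: $f(x,x)=0$. B2: $f$ uniformly continuous on bounded subsets of $E\times E$. B3: $f(x,\cdot)$ $C$-convex. B4: $T$ has nonempty closed convex values, is demiclosed, lower semicontinuous at each point of $K$, and quasi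 $D_g$-nonexpansive (definitions: demiclosed means $x^k\rightharpoonup\bar x$, $d(x^k,T(x^k))\to0\Rightarrow\bar x\in T(\bar x)$; lower semicontinuous at $\bar x$ means $x^k\to\bar x$, $\bar y\in T(\bar x)\Rightarrow\exists y^k\in T(x^k)$ with $y^k\to\bar y$; quasi $D_g$-nonexpansive means $S(x)=\Pi^g_{T(x)}(x)$ has a fixed point and $D_g(p,S(x))\le D_g(p,x)$ for fixed points $p$ of $S$, $x\in K$). $\mathrm{argmin}^C_w\{G(y):y\in Q\}$: $a\in Q$ with no $y\in Q$ such that $G(a)-G(y)\in\mathrm{int}(C)$. Algorithm SEML: parameters $v^0\in K$, $\delta,\theta\in(0,1)$, $\{\beta_k\}\subset[\hat\beta,\tilde\beta]$ with $0<\hat\beta\le\tilde\beta$, $\{\gamma_k\}\subset[\varepsilon,1]$, $\varepsilon\in(0,1]$, $\{e^k\}\subset\mathrm{int}(C)$, $e^k\to\bar e\in\mathrm{int}(C)$. Given $v^k$: $x^k=\Pi^g_{T(v^k)}(v^k)$; $z^k\in\mathrm{argmin}^C_w\{\beta_kf(x^k,y)+g(y)e^k-\langle y,g'(x^k)\rangle e^k:y\in T(v^k)\}$; stop if $z^k=v^k$; else $\ell(k)=\min\{\ell\ge0:-\beta_kf(y^\ell,x^k)+\beta_kf(y^\ell,z^k)+\delta D_g(z^k,x^k)e^k\notin\mathrm{int}(C)\}$, $y^\ell=\theta^\ell z^k+(1-\theta^\ell)x^k$; $\alpha_k=\theta^{\ell(k)}$; $y^k=\alpha_kz^k+(1-\alpha_k)x^k$;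 $H_k=\{y:f(y^k,y)\in-C\}$; $K_0=K\cap H_0$, $K_k=K_{k-1}\cap H_k$; $w^k=\Pi^g_{K_k}(x^k)$; $v^{k+1}=\Pi^g_{L_k\cap M_k\cap N_k}(v^0)$ with $L_k=\{z:\langle z-x^k,g'(x^k)-g'(w^k)\rangle\le-\gamma_kD_g(x^k,w^k)\}$, $M_k=\{z:\langle z-v^k,g'(v^k)-g'(x^k)\rangle\le-\gamma_kD_g(v^k,x^k)\}$, $N_k=\{z:\langle z-v^k,g'(v^0)-g'(v^k)\rangle\le0\}$. *)

(* Defs.v *)
From HB Require Import structures.
From mathcomp Require Import all_boot all_order all_algebra.
From mathcomp Require Import all_classical all_reals all_analysis.
Set Implicit Arguments. Unset Strict Implicit. Unset Printing Implicit Defensive.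
Import Order.TTheory GRing.Theory Num.Theory.
Import numFieldNormedType.Exports.
Local Open Scope classical_set_scope.
Local Open Scope ring_scope.

Section Defs.
Context {R : realType}.

Definition convex_sub {V : normedModType R} (A : set V) : Prop :=
  forall x y (t : R), A x -> A y -> 0 <= t -> t <= 1 ->
    A (t *: x + (1 - t) *: y).

Definition bounded_sub {V : normedModType R} (A : set V) : Prop :=
  exists M : R, forall x, A x -> `|x| <= M.

Definition cont_linear_functional {V : normedModType R} (phi : V -> R) : Prop :=
  (forall (a : R) (x y : V), phi (a *: x + y) = a * phi x + phi y) /\ continuous phi.

Definition weak_cvg {V : normedModType R} (u : nat -> V) (x : V) : Prop :=
  forall phi : V -> R, cont_linear_functional phi -> (phi \o u) @ \oo --> phi x.

(* d(x^k, A^k) -> 0, with d(x,A) = inf_{a in A} ||x - a|| *)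
Definition dist_to_zero {V : normedModType R} (u : nat -> V) (A : nat -> set V) : Prop :=
  forall eps : R, 0 < eps -> \forall k \near \oo, exists a, A k a /\ `|u k - a| < eps.

Definition strictly_convex {V : normedModType R} (g : V -> R) : Prop :=
  forall x y (t : R), x != y -> 0 < t -> t < 1 ->
    g (t *: x + (1 - t) *: y) < t * g x + (1 - t) * g y.

Definition lower_semicont {V : normedModType R} (g : V -> R) : Prop :=
  forall x (a : R), a < g x -> \forall y \near x, a < g y.

(* g is Gateaux differentiable with derivative g' : E -> E^*,
   <h, g'(x)> is written g' x h *)
Definition gateaux_derivative {V : normedModType R} (g : V -> R) (g' : V -> V -> R) : Prop :=
  forall x, cont_linear_functional (g' x) /\
    forall h, (fun t : R => t^-1 * (g (x + t *: h) - g x)) @ 0^' --> g' x h.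

Definition in_class_F {V : normedModType R} (g : V -> R) (g' : V -> V -> R) : Prop :=
  [/\ strictly_convex g, lower_semicont g & gateaux_derivative g g'].

Definition Dg {V : normedModType R} (g : V -> R) (g' : V -> V -> R) (x y : V) : R :=
  g x - g y - g' y (x - y).

Definition H1 {V : normedModType R} (g : V -> R) g' : Prop :=
  forall (x : V) (r : R), bounded_sub [set y | Dg g g' x y <= r].

(* H2: inf_{x in A} v_g(x,t) > 0 for t > 0 and bounded A, where
   v_g(x,t) = inf { D_g(y,x) : ||y - x|| = t } *)
Definition H2 {V : normedModType R} (g : V -> R) g' : Prop :=
  forall (A : set V) (t : R), bounded_sub A -> 0 < t ->
    exists c : R, 0 < c /\
      forall x y, A x -> `|y - x| = t -> c <= Dg g g' y x.

(* H3: g' uniformly continuous on bounded sets (w.r.t. the dual norm) *)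
Definition H3 {V : normedModType R} (g' : V -> V -> R) : Prop :=
  forall (A : set V), bounded_sub A -> forall eps : R, 0 < eps ->
    exists delta : R, 0 < delta /\
      forall x y, A x -> A y -> `|x - y| < delta ->
        forall h, `|g' x h - g' y h| <= eps * `|h|.

Definition H4 {V : normedModType R} (g : V -> R) : Prop :=
  forall (z : V) (rho : R), 0 < rho -> forall M : R,
    exists N : R, forall x, N < `|x| -> M < g x - rho * `|x - z|.

(* p = Pi^g_D(x): the (unique) minimizer of D_g(., x) over D *)
Definition is_bproj {V : normedModType R} (g : V -> R) g' (D : set V) (x p : V) : Prop :=
  D p /\ forall y, D y -> Dg g g' p x <= Dg g g' y x.

Definition is_cone {W : normedModType R} (C : set W) : Prop :=
  forall (t : R) c, 0 <= t -> C c -> C (t *: c).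

Definition pointed {W : normedModType R} (C : set W) : Prop :=
  forall c, C c -> C (- c) -> c = 0.

Definition C_convex {V W : normedModType R} (C : set W) (G : V -> W) : Prop :=
  forall x y (t : R), 0 <= t -> t <= 1 ->
    C (t *: G x + (1 - t) *: G y - G (t *: x + (1 - t) *: y)).

Definition weak_argmin {V W : normedModType R} (C : set W) (G : V -> W) (Q : set V) (a : V) : Prop :=
  Q a /\ ~ (exists y, Q y /\ interior C (G a - G y)).

Definition B1 {V W : normedModType R} (f : V -> V -> W) : Prop :=
  forall x, f x x = 0.

Definition B2 {V W : normedModType R} (f : V -> V -> W) : Prop :=
  forall M : R, forall eps : R, 0 < eps -> exists delta : R, 0 < delta /\
    forall x y x' y', `|x| <= M -> `|y| <= M -> `|x'| <= M -> `|y'| <= M ->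
      `|x - x'| < delta -> `|y - y'| < delta -> `|f x y - f x' y'| < eps.

Definition B3 {V W : normedModType R} (C : set W) (f : V -> V -> W) : Prop :=
  forall x, C_convex C (f x).

Definition demiclosed {V : normedModType R} (K : set V) (T : V -> set V) : Prop :=
  forall (u : nat -> V) (xb : V), (forall k, K (u k)) ->
    weak_cvg u xb -> dist_to_zero u (fun k => T (u k)) -> T xb xb.

Definition lsc_multi_at {V : normedModType R} (K : set V) (T : V -> set V) (xb : V) : Prop :=
  forall (u : nat -> V) (yb : V), (forall k, K (u k)) -> u @ \oo --> xb -> T xb yb ->
    exists w : nat -> V, (forall k, T (u k) (w k)) /\ w @ \oo --> yb.

(* quasi D_g-nonexpansive: S(x) = Pi^g_{T(x)}(x) has a fixed point and
   D_g(p, S(x)) <= D_g(p, x) for fixed points p of S and x in K *)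
Definition quasi_Dg_nonexpansive {V : normedModType R} (g : V -> R) g'
    (K : set V) (T : V -> set V) : Prop :=
  (exists p, K p /\ is_bproj g g' (T p) p p) /\
  forall p x s, K p -> is_bproj g g' (T p) p p -> K x -> is_bproj g g' (T x) x s ->
    Dg g g' p s <= Dg g g' p x.

Definition B4 {V : normedModType R} (g : V -> R) g' (K : set V) (T : V -> set V) : Prop :=
  [/\ forall x, K x -> [/\ T x `<=` K, T x !=set0, closed (T x) & convex_sub (T x)],
      demiclosed K T,
      (forall xb, K xb -> lsc_multi_at K T xb) &
      quasi_Dg_nonexpansive g g' K T].

Definition seml_obj {V W : normedModType R} (g : V -> R) g' (f : V -> V -> W)
    (betak : R) (ek : W) (xk : V) : V -> W :=
  fun y => betak *: f xk y + (g y - g' xk y) *: ek.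

(* the Armijo-type condition defining l(k) *)
Definition seml_ls {V W : normedModType R} (g : V -> R) g' (C : set W) (f : V -> V -> W)
    (betak delta theta : R) (ek : W) (xk zk : V) (l : nat) : Prop :=
  let yl := theta ^+ l *: zk + (1 - theta ^+ l) *: xk in
  ~ interior C (- (betak *: f yl xk) + betak *: f yl zk + (delta * Dg g g' zk xk) *: ek).

Definition seml_K {V W : normedModType R} (C : set W) (f : V -> V -> W) (K : set V)
    (yseq : nat -> V) (k : nat) : set V :=
  [set u | K u /\ forall i, (i <= k)%N -> C (- f (yseq i) u)].

Definition seml_L {V : normedModType R} (g : V -> R) g' (gam : R) (xk wk : V) : set V :=
  [set u | g' xk (u - xk) - g' wk (u - xk) <= - (gam * Dg g g' xk wk)].
Definition seml_M {V : normedModType R} (g : V -> R) g' (gam : R) (vk xk : V) : set V :=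
  [set u | g' vk (u - vk) - g' xk (u - vk) <= - (gam * Dg g g' vk xk)].
Definition seml_N {V : normedModType R} (g' : V -> V -> R) (v0 vk : V) : set V :=
  [set u | g' v0 (u - vk) - g' vk (u - vk) <= 0].

Definition seml_step {V W : normedModType R} (g : V -> R) g' (C : set W)
    (f : V -> V -> W) (K : set V) (T : V -> set V)
    (delta theta : R) (beta gam : nat -> R) (e : nat -> W)
    (v x z y w : nat -> V) (alpha : nat -> R) (ell : nat -> nat) (j : nat) : Prop :=
  K (v j) /\
  is_bproj g g' (T (v j)) (v j) (x j) /\
  weak_argmin C (seml_obj g g' f (beta j) (e j) (x j)) (T (v j)) (z j) /\
  z j <> v j /\
  (seml_ls g g' C f (beta j) delta theta (e j) (x j) (z j) (ell j) /\
    (forall l, (l < ell j)%N -> ~ seml_ls g g' C f (beta j) delta theta (e j) (x j) (z j) l)) /\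
  alpha j = theta ^+ ell j /\
  y j = alpha j *: z j + (1 - alpha j) *: x j /\
  is_bproj g g' (seml_K C f K y j) (x j) (w j) /\
  is_bproj g g' (seml_L g g' (gam j) (x j) (w j) `&` seml_M g g' (gam j) (v j) (x j)
                   `&` seml_N g' (v 0%N) (v j)) (v 0%N) (v j.+1).

Definition seml_stops_at {V W : normedModType R} (g : V -> R) g' (C : set W)
    (f : V -> V -> W) (K : set V) (T : V -> set V)
    (delta theta : R) (beta gam : nat -> R) (e : nat -> W)
    (v x z y w : nat -> V) (alpha : nat -> R) (ell : nat -> nat) (k : nat) : Prop :=
  (forall j, (j < k)%N -> seml_step g g' C f K T delta theta beta gam e v x z y w alpha ell j) /\
  [/\ K (v k),
      is_bproj g g' (T (v k)) (v k) (x k),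
      weak_argmin C (seml_obj g g' f (beta k) (e k) (x k)) (T (v k)) (z k) &
      z k = v k].

End Defs.

(* Main.v *)
Require Import Defs.
From HB Require Import structures.
From mathcomp Require Import all_boot all_order all_algebra.
From mathcomp Require Import all_classical all_reals all_analysis.
From mathcomp Require Import lra ring.
Import Order.TTheory GRing.Theory Num.Theory.
Import numFieldNormedType.Exports.
Local Open Scope classical_set_scope.
Local Open Scope ring_scope.

Section H.
Context {R : realType}.

Lemma intP {W : normedModType R} (C : set W) a :
  interior C a -> exists2 r : R, 0 < r & forall y, `|a - y| < r -> C y.
Proof.
rewrite /interior /= => /nbhs_normP [r r0 Hr]; exists r => // y hy; exact: Hr.
Qed.

Lemma intP' (W : normedModType R) (C : set W) a r : 0 < r ->
  (forall y, `|a - y| < r -> C y) -> interior C a.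
Proof.
move=> r0 H; rewrite /interior /=; apply/nbhs_normP; exists r => // y hy; exact: H.
Qed.

Lemma gat_near {V : normedModType R} (g : V -> R) g' x h (r : R) :
  gateaux_derivative g g' -> 0 < r ->
  exists t : R, [/\ 0 < t, t < 2^-1 & `|g' x h - t^-1 * (g (x + t *: h) - g x)| < r].
Proof.
move=> hG r0; have := (hG x).2 h; move/cvgrPdist_lt => /(_ r r0).
rewrite /within /= => /nbhs_normP [e e0 He].
pose t := Num.min (e / 2) (4^-1).
have t0 : 0 < t by rewrite lt_min divr_gt0 //= invr_gt0.
exists t; split => //.
  by rewrite /t gt_min; apply/orP; right; rewrite ltf_pV2 ?posrE //; lra.
apply: He; last by rewrite gt_eqF.
rewrite /ball_ /= sub0r normrN gtr0_norm //.
rewrite /t gt_min; apply/orP; left; rewrite ltr_pdivrMr //. have e0' : 0 < e := e0. lra.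
Qed.

Lemma lin0 {V : normedModType R} (phi : V -> R) : cont_linear_functional phi -> phi 0 = 0.
Proof.
case=> hl _; have := hl 1 0 0; rewrite scale1r addr0 mul1r => h; lra.
Qed.

Lemma linZ {V : normedModType R} (phi : V -> R) t h : cont_linear_functional phi ->
  phi (t *: h) = t * phi h.
Proof. move=> hp; have := hp.1 t h 0; rewrite !addr0 (lin0 _ hp) addr0; done. Qed.

Lemma linB {V : normedModType R} (phi : V -> R) u x : cont_linear_functional phi ->
  phi (u - x) = phi u - phi x.
Proof.
move=> hp; have := hp.1 (-1) x u; rewrite scaleN1r addrC => ->; rewrite mulN1r; lra.
Qed.

Lemma comb {V : normedModType R} (t : R) (u x : V) :
  t *: u + (1 - t) *: x = x + t *: (u - x).
Proof. by rewrite scalerBr scalerBl scale1r addrCA. Qed.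

Lemma vec1 {V : normedModType R} (x y : V) (t : R) :
  (2 * t) *: (2^-1 *: x + (1 - 2^-1) *: y) + (1 - 2 * t) *: y = y + t *: (x - y).
Proof.
rewrite scalerDr !scalerA.
have -> : 2 * t / 2 = t by field.
have -> : 2 * t * (1 - 2^-1) = t by field.
rewrite -addrA -scalerDl.
have -> : t + (1 - 2 * t) = 1 - t by ring.
exact: comb.
Qed.

Lemma Dg_pos {V : normedModType R} (g : V -> R) g' x y :
  strictly_convex g -> gateaux_derivative g g' -> x != y ->
  g' y (x - y) < g x - g y.
Proof.
move=> hS hG nxy.
set m := 2^-1 *: x + (1 - 2^-1) *: y.
have hm : g m < 2^-1 * g x + (1 - 2^-1) * g y.
  apply: hS => //; rewrite ?invr_gt0 //; rewrite invf_lt1 //; lra.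
set s := 2^-1 * g x + (1 - 2^-1) * g y - g m.
have s0 : 0 < s by rewrite /s subr_gt0.
have [t [t0 t2 ht]] := gat_near g g' y (x - y) s hG s0.
have nmy : m != y.
  apply/negP => /eqP hmy; move/negP: nxy; apply.
  move: hmy; rewrite /m comb => /eqP; rewrite addrC -subr_eq0 addrK scaler_eq0 invr_eq0.
  by rewrite pnatr_eq0 /= subr_eq0.
have hc := hS m y (2 * t) nmy ltac:(lra) ltac:(lra).
rewrite vec1 in hc.
set d := g (y + t *: (x - y)) - g y in ht.
have hd : d < 2 * t * (g m - g y) by rewrite /d; lra.
have hq : t^-1 * d < 2 * (g m - g y).
  by rewrite ltr_pdivrMl // mulrA (mulrC t).
move: ht; rewrite ltr_norml => /andP [h1 h2].
have sdef : s = 2^-1 * g x + (1 - 2^-1) * g y - g m by [].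
have h2inv : 2^-1 = 1/2 :> R by rewrite div1r.
lra.
Qed.

Lemma C_add {W : normedModType R} (C : set W) a b :
  convex_sub C -> is_cone C -> C a -> C b -> C (a + b).
Proof.
move=> hcv hco ha hb; have := hco 2 _ ltac:(lra) (hcv a b 2^-1 ha hb ltac:(lra) ltac:(lra)).
rewrite scalerDr !scalerA mulfV ?pnatr_eq0 // scale1r.
have -> : 2 * (1 - 2^-1) = 1 :> R by field.
by rewrite scale1r.
Qed.

Lemma int_add {W : normedModType R} (C : set W) a c :
  convex_sub C -> is_cone C -> interior C a -> C c -> interior C (a + c).
Proof.
move=> hcv hco /intP [r r0 Hr] hc; apply: (@intP' _ C _ r r0) => y hy.
rewrite -(subrK c y); apply: C_add => //; apply: Hr.
by rewrite opprB addrA.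
Qed.

Lemma int_scale {W : normedModType R} (C : set W) a t :
  is_cone C -> 0 < t -> interior C a -> interior C (t *: a).
Proof.
move=> hco t0 /intP [r r0 Hr]; apply: (@intP' _ C _ (t * r)); first exact: mulr_gt0.
move=> y hy.
have -> : y = t *: (t^-1 *: y) by rewrite scalerA mulfV ?gt_eqF // scale1r.
apply: hco; first exact: ltW.
apply: Hr.
have -> : a - t^-1 *: y = t^-1 *: (t *: a - y).
  by rewrite scalerBr scalerA mulVf ?gt_eqF // scale1r.
rewrite normrZ gtr0_norm ?invr_gt0 // ltr_pdivrMl //.
Qed.

End H.

Theorem proposition3p5 (R : realType)
  (E Y : completeNormedModType R)
  (K : set E) (C : set Y) (f : E -> E -> Y) (T : E -> set E)
  (g : E -> R) (g' : E -> E -> R)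
  (* standing assumptions *)
  (hK0 : K !=set0) (hKc : closed K) (hKcv : convex_sub K)
  (hCc : closed C) (hCcv : convex_sub C) (hCcone : is_cone C) (hCp : pointed C)
  (hCint : interior C !=set0)
  (hF : in_class_F g g') (hH1 : H1 g g') (hH2 : H2 g g') (hH3 : H3 g') (hH4 : H4 g)
  (hB1 : B1 f) (hB2 : B2 f) (hB3 : B3 C f) (hB4 : B4 g g' K T)
  (* parameters of Algorithm SEML *)
  (delta theta : R) (beta gam : nat -> R) (e : nat -> Y) (ebar : Y)
  (betah betat eps : R)
  (hdelta : 0 < delta < 1) (htheta : 0 < theta < 1)
  (hbeta0 : 0 < betah) (hbeta1 : betah <= betat)
  (hbeta : forall k, betah <= beta k <= betat)
  (heps : 0 < eps <= 1) (hgam : forall k, eps <= gam k <= 1)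
  (he : forall k, interior C (e k)) (hecvg : e @ \oo --> ebar) (hebar : interior C ebar)
  (* iterates of Algorithm SEML *)
  (v x z y w : nat -> E) (alpha : nat -> R) (ell : nat -> nat)
  (hv0 : K (v 0%N)) (k : nat)
  (hstop : seml_stops_at g g' C f K T delta theta beta gam e v x z y w alpha ell k) :
  T (x k) (x k) /\ forall u, T (x k) u -> ~ interior C (- f (x k) u).
Proof.
case: hstop => _ [hKv hproj hwa hzv].
case: hF => hS _ hG.
case: hB4 => hT _ _ _.
have [_ _ _ hTcv] := hT (v k) hKv.
have hTvv : T (v k) (v k) by rewrite -{2}hzv; case: hwa.
have hxv : x k = v k.
  case: (eqVneq (x k) (v k)) => // nxv.
  have h1 := Dg_pos g g' (x k) (v k) hS hG nxv.
  have := hproj.2 (v k) hTvv.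
  rewrite /Dg !subrr (lin0 _ (hG (v k)).1) => h2; exfalso; lra.
split; first by rewrite hxv.
move=> u; rewrite hxv => hu hint.
rewrite hxv hzv in hwa.
case: hwa => _; apply.
set xx := v k in hTvv hu hint hTcv *.
set b := beta k.
have b0 : 0 < b by have := hbeta k; rewrite /b; lra.
set ek := e k.
have hi1 : interior C (- (b *: f xx u)) by rewrite -scalerN; exact: int_scale.
have [r r0 Hr] := intP _ _ hi1.
have E0 : 0 < 2 * (`|ek| + 1) by rewrite mulr_gt0 // ltr_pwDr.
have [t [t0 t2 ht]] := gat_near g g' xx (u - xx) (r / (2 * (`|ek| + 1))) hG
   ltac:(by rewrite divr_gt0).
set ut := t *: u + (1 - t) *: xx.
exists ut; split; first by apply: hTcv => //; [exact: ltW | lra].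
set D := Dg g g' ut xx.
set a := - (b *: f xx u) - (D / t) *: ek.
have hut : ut = xx + t *: (u - xx) by rewrite /ut comb.
have hh : xx + t *: (u - xx) - xx = t *: (u - xx) by rewrite addrC addKr.
have hDt : D / t = t^-1 * (g (xx + t *: (u - xx)) - g xx) - g' xx (u - xx).
  rewrite /D /Dg hut hh (linZ _ _ _ (hG xx).1); field; by rewrite gt_eqF.
have hsmall : `|(D / t) *: ek| < r / 2.
  rewrite normrZ hDt distrC.
  move: ht; set q := `|_ - _| => ht.
  have hq0 : 0 <= q by rewrite /q normr_ge0.
  have hE0 : 0 <= `|ek| by rewrite normr_ge0.
  move: ht; rewrite ltr_pdivlMr // => ht.
  nra.
have ha : interior C a.
  apply: (@intP' _ _ C _ (r / 2)); first by rewrite divr_gt0.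
  move=> y0 hy0; apply: Hr.
  apply: (le_lt_trans (ler_distD a _ _)).
  have -> : - (b *: f xx u) - a = (D / t) *: ek by rewrite /a opprB addrC subrK.
  lra.
have hc : C (b *: (t *: f xx u + (1 - t) *: f xx xx - f xx ut)).
  apply: hCcone; first exact: ltW.
  by apply: hB3; [exact: ltW | lra].
have hid : seml_obj g g' f b ek xx xx - seml_obj g g' f b ek xx ut =
    t *: a + b *: (t *: f xx u + (1 - t) *: f xx xx - f xx ut).
  rewrite /seml_obj /a hB1 !scaler0 addr0 add0r.
  rewrite !scalerBr scalerN !scalerA.
  have -> : t * (D / t) = D by field; rewrite gt_eqF.
  rewrite (mulrC b t) addrACA addNr add0r.
  rewrite opprD addrCA -scalerBl addrC -scaleNr.
  congr (_ *: _ - _).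
  rewrite /D /Dg (linB _ _ _ (hG xx).1); ring.
rewrite hid; apply: int_add => //; exact: int_scale.
Qed.
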